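(* Let $D=(N,A)$, $\mathcal{K}$, $\{D^k\}_{k\in\mathcal{K}}$ be an instance of SND-RR with time horizon $T$, let $\mathcal{A}$ be a valid arc partition and $G=G(D,\mathcal{A})$ the auxiliary flat network. Then the integer programs SND-RR$(D_T)$ and SND-RR$(G_T)$ have the same number of variables and the same number of constraints, and they are equivalent: there is a bijection between their feasible solutions preserving the objective value.
   Context: An instance of SND-RR consists of: a directed graph $D=(N,A)$; for each arc $vw\in A$ a transit time $\tau_{vw}\in\mathbb{Z}_{>0}$, fixed cost $f_{vw}>0$, capacity $u_{vw}\in\mathbb{Z}_{>0}$, and per-unit cost $c^k_{vw}>0$ for each commodity $k$; a set $\mathcal{K}$ of commodities, each with origin $o_k$, destination $d_k$, demand $q_k$, release time $r_k$, deadline $l_k$ (integers, earliest release $0$); and subgraphs $D^k=(N^k,A^k)\subseteq D$. Standing assumption: $\delta^+_{D^k}(d_k)=\emptyset$ and $\delta^+_{D^k}(v)\ne\emptyset$ for $v\in N^k\setminus\{d_k\}$. $T=\max_kl_k$, $[T]=\{0,\dots,T\}$. For any flat graph $H$ with transit times, its time-expanded network $H_T$ has timed nodes $(v,t)$, $t\in[T]$, movement arcs $((v,t),(w,t+\tau_{vw}))$ for arcs $vw$ of $H$ with $t+\tau_{vw}\le T$, and holdover arcs $((v,t),(v,t+1))$. $D_T=(N_T,A_T\cup H_T)$, $D^k_T=(N^k_T,A^k_T\cup H^k_T)$. For a timed arc $a=((v,t),(w,t'))$, $u_a=u_{vw}$, $f_a=f_{vw}$, $c^k_a=c^k_{vw}$;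 $x^k(S)=\sum_{a\in S}x^k_a$; $\delta^\pm$ denote outgoing/incoming timed arcs. SND-RR$(D_T)$: minimize $\sum_{a\in A_T}f_ay_a+\sum_{a\in A_T}\sum_kc^k_aq_kx^k_a$ s.t. for all $k$, $(v,t)\in N^k_T$: $x^k(\delta^+_{D^k_T}(v,t))-x^k(\delta^-_{D^k_T}(v,t))$ is $1$ at $(o_k,r_k)$, $-1$ at $(d_k,l_k)$, $0$ otherwise; $\sum_kq_kx^k_a\le u_ay_a$ for $a\in A_T$; $x^k_a\in\{0,1\}$ for $a\in A^k_T\cup H^k_T$; $y_a\in\mathbb{Z}_{\ge0}$ for $a\in A_T$. Valid partition: $\mathcal{A}=\{\mathcal{A}_v\}_{v\in N}$ with each $\mathcal{A}_v$ a partition of $\delta^+_D(v)$ such that for each $k$, $\delta^+_{D^k}(v)\subseteq A_i$ for some $A_i\in\mathcal{A}_v$. Auxiliary network $G=(V,E)$: $\mathcal{V}(v)=\{v^0,\dots,v^{|\mathcal{A}_v|}\}$ (copy $v^i$ per part $A_i$, terminal copy $v^0$), $V=\bigcup_v\mathcal{V}(v)$, $E=\{v^iw^j: vw\in A_i\in\mathcal{A}_v, w^j\in\mathcal{V}(w)\}$; each $v^iw^j$ gets the transit time and costs of $vw$. With $\mathcal{K}(A_i)=\{k:\emptyset\ne\delta^+_{D^k}(v)\subseteq A_i\}$ for $A_i\in\mathcal{A}_v$: $G^k=(V^k,E^k)$, $V^k=\{v^i:v\in N^k,A_i\in\mathcal{A}_v,k\in\mathcal{K}(A_i)\}\cup\{d^0_k\}$,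 $E^k=\{v^iw^j:vw\in A^k,v^i,w^j\in V^k\}$; $o'_k$ denotes the unique copy of $o_k$ in $V^k$. $G_T=(V_T,E_T\cup F_T)$ and $G^k_T=(V^k_T,E^k_T\cup F^k_T)$ are the time-expanded networks. For $a=((v,t),(w,t'))\in A_T$, $\mathcal{E}_T(a)=\{((v^i,t),(w^j,t')): vw\in A_i\in\mathcal{A}_v, w^j\in\mathcal{V}(w)\}$. SND-RR$(G_T)$: minimize $\sum_{a\in A_T}f_ay_a+\sum_k\sum_{e\in E_T}c^k_eq_kx^k_e$ s.t. for all $k$, $(v,t)\in V^k_T$: $x^k(\delta^+_{G^k_T}(v,t))-x^k(\delta^-_{G^k_T}(v,t))$ is $1$ at $(o'_k,r_k)$, $-1$ at $(d^0_k,l_k)$, $0$ otherwise; $\sum_k\sum_{e\in\mathcal{E}_T(a)}q_kx^k_e\le u_ay_a$ for all $a\in A_T$; $x^k_e\in\{0,1\}$ for $e\in E^k_T\cup F^k_T$; $y_a\in\mathbb{Z}_{\ge0}$ for $a\in A_T$. *)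

(* Defs.v *)
From HB Require Import structures.
From mathcomp Require Import all_boot all_order all_algebra.
Set Implicit Arguments. Unset Strict Implicit. Unset Printing Implicit Defensive.
Import Order.TTheory GRing.Theory Num.Theory.

Section TimeExpansion.
Variables (X : finType) (Tm : nat).

Definition tnode := (X * 'I_Tm.+1)%type.
Definition tarc := (tnode * tnode)%type.

Definition tnodes (S : {set X}) : {set tnode} := [set p : tnode | p.1 \in S].

Definition movarcs (tau : X -> X -> nat) (E : {set X * X}) : {set tarc} :=
  [set a : tarc | ((a.1.1, a.2.1) \in E) && (a.1.2 + tau a.1.1 a.2.1 == a.2.2)%N].

Definition holdarcs (S : {set X}) : {set tarc} :=
  [set a : tarc | [&& a.1.1 \in S, a.2.1 == a.1.1 & (a.1.2).+1 == a.2.2]].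

Definition outarcs (B : {set tarc}) (p : tnode) : {set tarc} := [set a in B | a.1 == p].
Definition inarcs (B : {set tarc}) (p : tnode) : {set tarc} := [set a in B | a.2 == p].

Definition is_tnode (p : tnode) (v : X) (t : nat) : bool := (p.1 == v) && (p.2 == t :> nat).
End TimeExpansion.

Record instance (R : realFieldType) (N K : finType) := Instance {
  arcs : {set N * N};
  tau  : N -> N -> nat;
  fc   : N -> N -> R;
  cap  : N -> N -> nat;
  uc   : K -> N -> N -> R;
  orig : K -> N;
  dest : K -> N;
  dem  : K -> R;
  rel  : K -> nat;
  ddl  : K -> nat;
  Nk   : K -> {set N};
  Ak   : K -> {set N * N};
  no_loop : forall a, a \in arcs -> a.1 != a.2;
  tau_pos : forall a, a \in arcs -> (0 < tau a.1 a.2)%N;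
  fc_pos  : forall a, a \in arcs -> (0 < fc a.1 a.2)%R;
  cap_pos : forall a, a \in arcs -> (0 < cap a.1 a.2)%N;
  uc_pos  : forall k a, a \in arcs -> (0 < uc k a.1 a.2)%R;
  dem_pos : forall k, (0 < dem k)%R;
  rel0    : exists k, rel k = 0%N;
  Ak_sub  : forall k, Ak k \subset arcs;
  Ak_ends : forall k a, a \in Ak k -> (a.1 \in Nk k) && (a.2 \in Nk k);
  orig_in : forall k, orig k \in Nk k;
  dest_in : forall k, dest k \in Nk k;
  dest_out : forall k, [set a in Ak k | a.1 == dest k] = set0;
  other_out : forall k v, v \in Nk k -> v != dest k -> [set a in Ak k | a.1 == v] != set0
}.

Section SND.
Variables (R : realFieldType) (N K : finType) (I : instance R N K).

Definition horizon : nat := (\max_(k : K) ddl I k)%N.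

Local Notation T := horizon.
Definition tarcN := tarc N T.
Definition tnodeN := tnode N T.

Definition outk (k : K) (v : N) : {set N * N} := [set a in Ak I k | a.1 == v].

Definition AT : {set tarcN} := movarcs T (tau I) (arcs I).
Definition AkT (k : K) : {set tarcN} := movarcs T (tau I) (Ak I k).
Definition HkT (k : K) : {set tarcN} := holdarcs T (Nk I k).
Definition arcsDkT (k : K) : {set tarcN} := AkT k :|: HkT k.
Definition NkT (k : K) : {set tnodeN} := tnodes T (Nk I k).

(* a candidate solution: y_a (a in A_T, nonneg. integer), x^k_a (binary);
   entries outside the variable index sets are required to be 0 *)
Definition solD := ({ffun tarcN -> nat} * {ffun K * tarcN -> bool})%type.

Definition feasD (s : solD) : Prop :=
  let y := s.1 in let x := s.2 in
  [/\ (forall a, a \notin AT -> y a = 0%N),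
      (forall k a, a \notin arcsDkT k -> x (k, a) = false),
      (forall k p, p \in NkT k ->
         ((\sum_(a in outarcs (arcsDkT k) p) (x (k, a) : nat))%:Z
          - (\sum_(a in inarcs (arcsDkT k) p) (x (k, a) : nat))%:Z)%R
         = ((is_tnode p (orig I k) (rel I k))%:Z - (is_tnode p (dest I k) (ddl I k))%:Z)%R)
    & (forall a, a \in AT ->
         (\sum_(k : K) dem I k * (x (k, a) : nat)%:R <= (cap I a.1.1 a.2.1 * y a)%:R)%R)].

Definition objD (s : solD) : R :=
  ((\sum_(a in AT) fc I a.1.1 a.2.1 * (s.1 a)%:R)
   + \sum_(a in AT) \sum_(k : K) uc I k a.1.1 a.2.1 * dem I k * (s.2 (k, a) : nat)%:R)%R.

Definition nvarsD : nat := (#|AT| + \sum_(k : K) #|arcsDkT k|)%N.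
Definition nconsD : nat := (\sum_(k : K) #|NkT k| + #|AT|)%N.

(* A_v is given as a set of parts (blocks) of delta^+_D(v) *)
Definition valid_partition (P : N -> {set {set N * N}}) : Prop :=
  forall v, partition (P v) [set a in arcs I | a.1 == v] /\
    forall k, outk k v != set0 -> exists2 B, B \in P v & outk k v \subset B.

Variable P : N -> {set {set N * N}}.

(* copies of nodes: (v, None) is the terminal copy v^0,
   (v, Some B) is the copy v^i for the part B = A_i of A_v *)
Definition cnode := (N * option {set N * N})%type.

Definition Vall : {set cnode} :=
  [set c : cnode | if c.2 is Some B then B \in P c.1 else true].

Definition Kpart (v : N) (B : {set N * N}) : {set K} :=
  [set k | (outk k v != set0) && (outk k v \subset B)].

Definition Vk (k : K) : {set cnode} :=
  [set c : cnode | match c.2 with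
                   | Some B => [&& c.1 \in Nk I k, B \in P c.1 & k \in Kpart c.1 B]
                   | None => c.1 == dest I k
                   end].

Definition Eall : {set cnode * cnode} :=
  [set e : cnode * cnode | match e.1.2 with
                           | Some B => [&& B \in P e.1.1, (e.1.1, e.2.1) \in B & e.2 \in Vall]
                           | None => false
                           end].

Definition Ek (k : K) : {set cnode * cnode} :=
  [set e in Eall | [&& (e.1.1, e.2.1) \in Ak I k, e.1 \in Vk k & e.2 \in Vk k]].

Definition tauG (c c' : cnode) : nat := tau I c.1 c'.1.

Definition tarcG := tarc cnode T.
Definition tnodeG := tnode cnode T.

Definition ET : {set tarcG} := movarcs T tauG Eall.
Definition EkT (k : K) : {set tarcG} := movarcs T tauG (Ek k).
Definition FkT (k : K) : {set tarcG} := holdarcs T (Vk k).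
Definition arcsGkT (k : K) : {set tarcG} := EkT k :|: FkT k.
Definition VkT (k : K) : {set tnodeG} := tnodes T (Vk k).

(* o'_k : the unique copy of o_k in V^k *)
Definition origG (k : K) : cnode := odflt (orig I k, None) [pick c in Vk k | c.1 == orig I k].

Definition ETof (a : tarcN) : {set tarcG} :=
  [set e : tarcG | [&& e.1.1.1 == a.1.1, e.2.1.1 == a.2.1,
                      e.1.2 == a.1.2, e.2.2 == a.2.2 & (e.1.1, e.2.1) \in Eall]].

Definition solG := ({ffun tarcN -> nat} * {ffun K * tarcG -> bool})%type.

Definition feasG (s : solG) : Prop :=
  let y := s.1 in let x := s.2 in
  [/\ (forall a, a \notin AT -> y a = 0%N),
      (forall k e, e \notin arcsGkT k -> x (k, e) = false),
      (forall k p, p \in VkT k ->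
         ((\sum_(e in outarcs (arcsGkT k) p) (x (k, e) : nat))%:Z
          - (\sum_(e in inarcs (arcsGkT k) p) (x (k, e) : nat))%:Z)%R
         = ((is_tnode p (origG k) (rel I k))%:Z
            - (is_tnode p (dest I k, None) (ddl I k))%:Z)%R)
    & (forall a, a \in AT ->
         (\sum_(k : K) \sum_(e in ETof a) dem I k * (x (k, e) : nat)%:R
            <= (cap I a.1.1 a.2.1 * y a)%:R)%R)].

Definition objG (s : solG) : R :=
  ((\sum_(a in AT) fc I a.1.1 a.2.1 * (s.1 a)%:R)
   + \sum_(k : K) \sum_(e in ET) uc I k e.1.1.1 e.2.1.1 * dem I k * (s.2 (k, e) : nat)%:R)%R.

Definition nvarsG : nat := (#|AT| + \sum_(k : K) #|arcsGkT k|)%N.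
Definition nconsG : nat := (\sum_(k : K) #|VkT k| + #|AT|)%N.

End SND.

(* Main.v *)
Require Import Defs.
From HB Require Import structures.
Set Warnings "-notation-overridden,-ambiguous-paths".
From mathcomp Require Import all_boot all_order all_algebra.
Set Implicit Arguments. Unset Strict Implicit. Unset Printing Implicit Defensive.
Import Order.TTheory GRing.Theory Num.Theory.

Section Proof.
Variables (R : realFieldType) (N K : finType) (I : instance R N K)
  (P : N -> {set {set N * N}}).
Hypothesis vP : valid_partition I P.

Local Notation T := (horizon I).

Definition cp (k : K) (v : N) : cnode N :=
  if v == dest I k then (v, None) else (v, [pick B in P v | outk I k v \subset B]).

Definition pnode (p : tnodeG I) : tnodeN I := (p.1.1, p.2).
Definition lnode k (q : tnodeN I) : tnodeG I := (cp k q.1, q.2).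
Definition proj (e : tarcG I) : tarcN I := (pnode e.1, pnode e.2).
Definition lift k (a : tarcN I) : tarcG I := (lnode k a.1, lnode k a.2).

Lemma cp1 k v : (cp k v).1 = v.
Proof. by rewrite /cp; case: ifP. Qed.

Lemma outk_dest k : outk I k (dest I k) = set0.
Proof. exact: dest_out. Qed.

Lemma Vk_Nk k c : c \in Vk I P k -> c.1 \in Nk I k.
Proof.
rewrite inE; case: c => v [B|] /=; first by case/and3P.
by move/eqP->; exact: dest_in.
Qed.

Lemma cp_Vk k v : v \in Nk I k -> cp k v \in Vk I P k.
Proof.
move=> vN; rewrite /cp; case: ifP => [/eqP->|vd]; first by rewrite inE /=.
have ne := other_out vN (negbT vd).
have [B BP sB] := (vP v).2 k ne.
case: pickP => [B' /andP[B'P sB']|/(_ B)]; last by rewrite BP sB.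
by rewrite inE /= vN B'P inE ne sB'.
Qed.

Lemma Vk_cp k c : c \in Vk I P k -> cp k c.1 = c.
Proof.
rewrite inE; case: c => v [B|] /=; last by move/eqP=> ->; rewrite /cp eqxx.
case/and3P=> vN BP; rewrite inE => /andP[ne sB].
have vd : v != dest I k.
  by apply: contraNneq ne => ->; rewrite outk_dest.
rewrite /cp (negbTE vd); case: pickP => [B' /andP[B'P sB']|/(_ B)]; last by rewrite BP sB.
have [a ain] := set0Pn _ ne.
have triv : trivIset (P v) by case/and3P: (vP v).1.
have h1 := def_pblock triv BP (subsetP sB _ ain).
have h2 := def_pblock triv B'P (subsetP sB' _ ain).
by rewrite -h1 -h2.
Qed.


Lemma proj_lift k a : proj (lift k a) = a.
Proof. by case: a => [[v t] [w t']]; rewrite /proj /lift /pnode /lnode /= !cp1. Qed.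

Lemma Vk_Vall k c : c \in Vk I P k -> c \in Vall P.
Proof. by rewrite !inE; case: c => v [B|] //= /and3P[]. Qed.

Lemma inGkT k (c c' : cnode N) (t t' : 'I_T.+1) :
  (((c, t), (c', t')) \in arcsGkT I P k) =
  ((c, c') \in Ek I P k) && (t + tau I c.1 c'.1 == t')%N
  || [&& c \in Vk I P k, c' == c & (t.+1 == t')%N].
Proof. by rewrite !inE. Qed.

Lemma inDkT k (v w : N) (t t' : 'I_T.+1) :
  (((v, t), (w, t')) \in arcsDkT I k) =
  ((v, w) \in Ak I k) && (t + tau I v w == t')%N
  || [&& v \in Nk I k, w == v & (t.+1 == t')%N].
Proof. by rewrite !inE. Qed.

Lemma inEk k (c c' : cnode N) : ((c, c') \in Ek I P k) =
  [&& (c, c') \in Eall P, (c.1, c'.1) \in Ak I k, c \in Vk I P k & c' \in Vk I P k].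
Proof. by rewrite !inE. Qed.

Lemma inEall (c c' : cnode N) : ((c, c') \in Eall P) =
  if c.2 is Some B then [&& B \in P c.1, (c.1, c'.1) \in B & c' \in Vall P] else false.
Proof. by rewrite !inE. Qed.

Lemma GkT_ends k e : e \in arcsGkT I P k -> (e.1.1 \in Vk I P k) && (e.2.1 \in Vk I P k).
Proof.
case: e => [[c t] [c' t']]; rewrite inGkT /= => /orP[/andP[]|/and3P[h /eqP-> _]].
  by rewrite inEk => /and4P[_ _ -> ->].
by rewrite h.
Qed.

Lemma lift_proj k e : e \in arcsGkT I P k -> lift k (proj e) = e.
Proof.
move=> /GkT_ends /andP[h1 h2]; case: e h1 h2 => [[c t] [c' t']] /= h1 h2.
by rewrite /lift /proj /lnode /pnode /= !Vk_cp.
Qed.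

Lemma proj_DkT k e : e \in arcsGkT I P k -> proj e \in arcsDkT I k.
Proof.
case: e => [[c t] [c' t']]; rewrite inGkT /proj /pnode inDkT /= => /orP[/andP[]|/and3P[h /eqP-> ht]].
  by rewrite inEk => /and4P[_ -> _ _] ->.
by rewrite (Vk_Nk h) eqxx ht orbT.
Qed.

Lemma lift_GkT k a : a \in arcsDkT I k -> lift k a \in arcsGkT I P k.
Proof.
case: a => [[v t] [w t']]; rewrite inDkT /lift /lnode inGkT /= => /orP[/andP[vw ht]|/and3P[h /eqP-> ht]].
  have /andP[vN wN] := Ak_ends vw.
  have vd : v != dest I k.
    apply/negP=> /eqP ed; have := outk_dest k; rewrite -ed => /setP/(_ (v, w)).
    by rewrite !inE vw eqxx.
  have cv := cp_Vk vN; have cw := cp_Vk wN.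
  rewrite inEk !cp1 ht andbT cv cw vw andbT /=.
  have [B /andP[BP sB] eB] : exists2 B, (B \in P v) && (outk I k v \subset B) & cp k v = (v, Some B).
    have [B0 B0P sB0] := (vP v).2 k (other_out vN vd).
    rewrite /cp (negbTE vd); case: pickP => [B h|]; first by exists B.
    by move/(_ B0); rewrite B0P sB0.
  rewrite eB inEall /= BP (Vk_Vall cw) cp1 andbT /=.
  by rewrite (subsetP sB) // !inE vw eqxx.
by rewrite cp_Vk // eqxx ht !orbT.
Qed.


Lemma proj_inj k : {in arcsGkT I P k &, injective proj}.
Proof. by move=> e1 e2 h1 h2 he; rewrite -(lift_proj h1) -(lift_proj h2) he. Qed.

Lemma sum_transfer (T0 : Type) (idx : T0) (op : Monoid.com_law idx) k
  (x : {ffun K * tarcN I -> bool}) (x' : {ffun K * tarcG I -> bool})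
  (S : {set tarcG I}) (S' : {set tarcN I}) (F : tarcN I -> bool -> T0) :
  (forall a, F a false = idx) ->
  (forall e, x' (k, e) = (e \in arcsGkT I P k) && x (k, proj e)) ->
  (forall a, x (k, a) = (a \in arcsDkT I k) && x' (k, lift k a)) ->
  (forall e, e \in arcsGkT I P k -> (e \in S) = (proj e \in S')) ->
  \big[op/idx]_(e in S) F (proj e) (x' (k, e)) = \big[op/idx]_(a in S') F a (x (k, a)).
Proof.
move=> F0 hG hD hS.
rewrite (bigID (fun e => e \in arcsGkT I P k)) /= [X in op _ X]big1 ?Monoid.mulm1;
  last by move=> e /andP[_ eG]; rewrite hG (negbTE eG) F0.
rewrite [RHS](bigID (fun a => a \in arcsDkT I k)) /= [X in op _ X]big1 ?Monoid.mulm1;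
  last by move=> a /andP[_ aD]; rewrite hD (negbTE aD) F0.
transitivity (\big[op/idx]_(e in S :&: arcsGkT I P k) F (proj e) (x (k, proj e))).
  apply: eq_big => [e|e]; first by rewrite in_setI.
  by case/andP=> _ eG; rewrite hG eG.
rewrite -(big_imset (fun a => F a (x (k, a)))) /=; last first.
  by move=> e1 e2; rewrite !in_setI => /andP[_ h1] /andP[_ h2]; exact: (proj_inj h1 h2).
apply: eq_bigl => a; apply/imsetP/andP.
  case=> e; rewrite inE => /andP[eS eG] ->.
  by rewrite -hS // eS proj_DkT.
case=> aS aD; exists (lift k a); last by rewrite proj_lift.
by rewrite inE lift_GkT // andbT hS ?lift_GkT // proj_lift.
Qed.


Lemma Vk_eq k c c' : c \in Vk I P k -> c' \in Vk I P k -> (c == c') = (c.1 == c'.1).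
Proof.
move=> h h'; apply/eqP/eqP => [->//|e].
by rewrite -(Vk_cp h) -(Vk_cp h') e.
Qed.

Lemma pnode_eq k (q q' : tnodeG I) : q.1 \in Vk I P k -> q'.1 \in Vk I P k ->
  (q == q') = (pnode q == pnode q').
Proof.
case: q q' => [c t] [c' t'] /= h h'; rewrite /pnode /= !xpair_eqE.
by rewrite (Vk_eq h h').
Qed.

Lemma in_outarcs (X : finType) Tm (B : {set tarc X Tm}) p e :
  (e \in outarcs B p) = (e \in B) && (e.1 == p).
Proof. by rewrite inE. Qed.

Lemma in_inarcs (X : finType) Tm (B : {set tarc X Tm}) p e :
  (e \in inarcs B p) = (e \in B) && (e.2 == p).
Proof. by rewrite inE. Qed.

Lemma inAT (a : tarcN I) : (a \in AT I) =
  ((a.1.1, a.2.1) \in arcs I) && (a.1.2 + tau I a.1.1 a.2.1 == a.2.2)%N.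
Proof. by rewrite inE. Qed.

Lemma inET (e : tarcG I) : (e \in ET I P) =
  ((e.1.1, e.2.1) \in Eall P) && (e.1.2 + tau I e.1.1.1 e.2.1.1 == e.2.2)%N.
Proof. by rewrite !inE. Qed.

Lemma inETof (a : tarcN I) (e : tarcG I) : (e \in ETof P a) =
  [&& e.1.1.1 == a.1.1, e.2.1.1 == a.2.1, e.1.2 == a.1.2, e.2.2 == a.2.2
    & (e.1.1, e.2.1) \in Eall P].
Proof. by rewrite !inE. Qed.

Lemma AT_noloop a : a \in AT I -> a.1.1 != a.2.1.
Proof. by rewrite inAT => /andP[/no_loop]. Qed.

Lemma Eall_arcs c c' : (c, c') \in Eall P -> (c.1, c'.1) \in arcs I.
Proof.
rewrite inEall; case: c => v [B|] //= /and3P[BP vB _].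
case/and3P: (vP v).1 => /eqP cov _ _.
have : (v, c'.1) \in cover (P v) by apply/bigcupP; exists B.
by rewrite cov inE => /andP[].
Qed.

Lemma GkT_Eall k e : e \in arcsGkT I P k ->
  ((e.1.1, e.2.1) \in Eall P) = ((e.1.1.1, e.2.1.1) \in arcs I).
Proof.
case: e => [[c t] [c' t']]; rewrite inGkT /= => /orP[/andP[]|/and3P[_ /eqP-> _]].
  by rewrite inEk => /and4P[h _ _ _] _; rewrite h (Eall_arcs h).
apply/idP/idP => [/Eall_arcs //|/no_loop]; by rewrite eqxx.
Qed.

Lemma origG_spec k : (origG I P k \in Vk I P k) && ((origG I P k).1 == orig I k).
Proof.
rewrite /origG; case: pickP => [c /andP[-> ->] //|/(_ (cp k (orig I k)))].
by rewrite cp_Vk ?orig_in // cp1 eqxx.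
Qed.

Lemma destG_Vk k : (dest I k, None) \in Vk I P k.
Proof. by rewrite inE /=. Qed.

Lemma rhs_eq k (p : tnodeG I) : p.1 \in Vk I P k ->
  (is_tnode p (origG I P k) (Defs.rel I k) = is_tnode (pnode p) (orig I k) (Defs.rel I k)) /\
  (is_tnode p (dest I k, None) (ddl I k) = is_tnode (pnode p) (dest I k) (ddl I k)).
Proof.
move=> pV; rewrite /is_tnode /pnode /=.
case/andP: (origG_spec k) => oV /eqP o1.
by rewrite (Vk_eq pV oV) (Vk_eq pV (destG_Vk k)) o1.
Qed.

Lemma inVkT k (p : tnodeG I) : (p \in VkT I P k) = (p.1 \in Vk I P k).
Proof. by rewrite /VkT /tnodes in_set. Qed.

Lemma inNkT k (p : tnodeN I) : (p \in NkT I k) = (p.1 \in Nk I k).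
Proof. by rewrite /NkT /tnodes in_set. Qed.

Section Rel.
Variables (x : {ffun K * tarcN I -> bool}) (x' : {ffun K * tarcG I -> bool}).
Hypothesis hG : forall k e, x' (k, e) = (e \in arcsGkT I P k) && x (k, proj e).
Hypothesis hD : forall k a, x (k, a) = (a \in arcsDkT I k) && x' (k, lift k a).

Lemma out_eq k p : p.1 \in Vk I P k ->
  (\sum_(e in outarcs (arcsGkT I P k) p) (x' (k, e) : nat))%N =
  (\sum_(a in outarcs (arcsDkT I k) (pnode p)) (x (k, a) : nat))%N.
Proof.
move=> pV.
apply: (@sum_transfer nat 0%N addn k x x' _ _ (fun _ b => nat_of_bool b)) => // e eG.
rewrite ?in_outarcs ?in_inarcs eG proj_DkT //=.
by rewrite (pnode_eq (q := e.1) _ pV) //; case/andP: (GkT_ends eG).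
Qed.

Lemma in_eq k p : p.1 \in Vk I P k ->
  (\sum_(e in inarcs (arcsGkT I P k) p) (x' (k, e) : nat))%N =
  (\sum_(a in inarcs (arcsDkT I k) (pnode p)) (x (k, a) : nat))%N.
Proof.
move=> pV.
apply: (@sum_transfer nat 0%N addn k x x' _ _ (fun _ b => nat_of_bool b)) => // e eG.
rewrite ?in_outarcs ?in_inarcs eG proj_DkT //=.
by rewrite (pnode_eq (q := e.2) _ pV) //; case/andP: (GkT_ends eG).
Qed.

Lemma cap_eq k a : a \in AT I ->
  (\sum_(e in ETof P a) dem I k * (x' (k, e) : nat)%:R = dem I k * (x (k, a) : nat)%:R)%R.
Proof.
move=> aAT.
transitivity (\sum_(b in [set a]) dem I k * (x (k, b) : nat)%:R)%R; last by rewrite big_set1.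
apply: (@sum_transfer R 0%R +%R k x x' _ _ (fun _ b => dem I k * (b : nat)%:R)%R) => //.
  by move=> _; rewrite mulr0.
move=> e eG; rewrite inETof in_set1 (GkT_Eall eG).
have := aAT; rewrite inAT => /andP[vw _].
case: a aAT vw => [[v t] [w t']] aAT /= vw.
case: e eG => [[c s] [c' s']] eG /=.
rewrite /proj /pnode /= !xpair_eqE.
case: (c.1 =P v) => [->|] //=; case: (c'.1 =P w) => [->|] //=; rewrite ?andbF //.
by case: (s =P t); case: (s' =P t'); rewrite //= vw.
Qed.

Lemma obj_eq k :
  (\sum_(e in ET I P) uc I k e.1.1.1 e.2.1.1 * dem I k * (x' (k, e) : nat)%:R =
   \sum_(a in AT I) uc I k a.1.1 a.2.1 * dem I k * (x (k, a) : nat)%:R)%R.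
Proof.
apply: (@sum_transfer R 0%R +%R k x x' _ _ (fun a b => uc I k a.1.1 a.2.1 * dem I k * (b : nat)%:R)%R) => //.
  by move=> ?; rewrite mulr0.
by move=> e eG; rewrite inET inAT (GkT_Eall eG).
Qed.

Lemma feas_equiv (y : {ffun tarcN I -> nat}) :
  feasD (y, x) <-> feasG P (y, x').
Proof.
rewrite /feasD /feasG /=.
split => [[h1 h2 h3 h4]|[h1 h2 h3 h4]]; split => //.
- by move=> k e eG; rewrite hG (negbTE eG).
- move=> k p; rewrite inVkT => pV.
  rewrite out_eq // in_eq //; have [-> ->] := rhs_eq pV.
  by apply: h3; rewrite inNkT Vk_Nk.
- move=> a aAT; under eq_bigr do rewrite cap_eq //.
  exact: h4.
- by move=> k a aD; rewrite hD (negbTE aD).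
- move=> k q; rewrite inNkT => qN.
  have pV : (lnode k q).1 \in Vk I P k by exact: cp_Vk.
  have := h3 k (lnode k q); rewrite inVkT => /(_ pV).
  rewrite out_eq // in_eq //; have [-> ->] := rhs_eq pV.
  by have -> : pnode (lnode k q) = q by case: q {qN pV} => v t; rewrite /pnode /lnode cp1.
- move=> a aAT; have := h4 a aAT.
  by under eq_bigr do rewrite cap_eq //.
Qed.

Lemma obj_equiv (y : {ffun tarcN I -> nat}) : objD (y, x) = objG P (y, x').
Proof.
rewrite /objD /objG /=; congr (_ + _)%R.
rewrite exchange_big; apply: eq_bigr => k _.
by rewrite obj_eq.
Qed.

End Rel.

Lemma card_arcs k : #|arcsDkT I k| = #|arcsGkT I P k|.
Proof.
rewrite -(card_in_imset (@proj_inj k)); apply: eq_card => a.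
apply/idP/imsetP => [aD|[e eG ->]]; last exact: proj_DkT.
by exists (lift k a); [exact: lift_GkT | rewrite proj_lift].
Qed.

Lemma pnode_inj k : {in VkT I P k &, injective pnode}.
Proof.
move=> p1 p2; rewrite !inVkT => h1 h2 e.
by apply/eqP; rewrite (pnode_eq h1 h2) e.
Qed.

Lemma card_nodes k : #|NkT I k| = #|VkT I P k|.
Proof.
rewrite -(card_in_imset (@pnode_inj k)); apply: eq_card => q.
apply/idP/imsetP => [qN|[p pV ->]]; last by rewrite inNkT Vk_Nk // -inVkT.
exists (lnode k q); first by rewrite inVkT cp_Vk // -inNkT.
by case: q qN => v t _; rewrite /pnode /lnode cp1.
Qed.

Definition phi (s : solD I) : solG I :=
  (s.1, [ffun ke : K * tarcG I => (ke.2 \in arcsGkT I P ke.1) && s.2 (ke.1, proj ke.2)]).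
Definition psi (s : solG I) : solD I :=
  (s.1, [ffun ka : K * tarcN I => (ka.2 \in arcsDkT I ka.1) && s.2 (ka.1, lift ka.1 ka.2)]).

Lemma main :
  [/\ nvarsD I = nvarsG I P,
      nconsD I = nconsG I P &
      exists (phi : solD I -> solG I) (psi : solG I -> solD I),
        (forall s : solD I, @feasD _ _ _ I s ->
           [/\ @feasG _ _ _ I P (phi s), psi (phi s) = s
             & @objG _ _ _ I P (phi s) = @objD _ _ _ I s]) /\
        (forall s' : solG I, @feasG _ _ _ I P s' ->
           @feasD _ _ _ I (psi s') /\ phi (psi s') = s')].
Proof.
split.
- by rewrite /nvarsD /nvarsG; congr (_ + _)%N; apply: eq_bigr => k _; exact: card_arcs.
- by rewrite /nconsD /nconsG; congr (_ + _)%N; apply: eq_bigr => k _; exact: card_nodes.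
exists phi, psi; split.
  case=> y x fs.
  have hG : forall k e, [ffun ke : K * tarcG I => (ke.2 \in arcsGkT I P ke.1) && x (ke.1, proj ke.2)] (k, e)
       = (e \in arcsGkT I P k) && x (k, proj e) by move=> k e; rewrite ffunE.
  have hD : forall k a, x (k, a) = (a \in arcsDkT I k) &&
       [ffun ke : K * tarcG I => (ke.2 \in arcsGkT I P ke.1) && x (ke.1, proj ke.2)] (k, lift k a).
    move=> k a; rewrite ffunE /=; case aD: (a \in arcsDkT I k).
      by rewrite lift_GkT // proj_lift.
    by case: fs => _ h2 _ _; rewrite h2 // aD.
  split.
  - by apply/(feas_equiv hG hD).
  - rewrite /psi /phi /=; congr (_, _); apply/ffunP => -[k a].
    by rewrite [RHS]hD ffunE.
  - by rewrite /phi -(obj_equiv hG hD).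
case=> y x' fs.
have hD : forall k a, [ffun ka : K * tarcN I => (ka.2 \in arcsDkT I ka.1) && x' (ka.1, lift ka.1 ka.2)] (k, a)
     = (a \in arcsDkT I k) && x' (k, lift k a) by move=> k a; rewrite ffunE.
have hG : forall k e, x' (k, e) = (e \in arcsGkT I P k) &&
     [ffun ka : K * tarcN I => (ka.2 \in arcsDkT I ka.1) && x' (ka.1, lift ka.1 ka.2)] (k, proj e).
  move=> k e; rewrite ffunE /=; case eG: (e \in arcsGkT I P k).
    by rewrite proj_DkT // lift_proj.
  by case: fs => _ h2 _ _; rewrite h2 // eG.
split.
- by apply/(feas_equiv hG hD).
- rewrite /psi /phi /=; congr (_, _); apply/ffunP => -[k e].
  by rewrite [RHS]hG ffunE.
Qed.

End Proof.

Unset Implicit Arguments.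
Set Strict Implicit.

Theorem theorem2 (R : realFieldType) (N K : finType) (I : instance R N K)
    (P : N -> {set {set N * N}}) :
  valid_partition I P ->
  [/\ nvarsD I = nvarsG I P,
      nconsD I = nconsG I P &
      exists (phi : solD I -> solG I) (psi : solG I -> solD I),
        (forall s : solD I, @feasD _ _ _ I s ->
           [/\ @feasG _ _ _ I P (phi s), psi (phi s) = s
             & @objG _ _ _ I P (phi s) = @objD _ _ _ I s]) /\
        (forall s' : solG I, @feasG _ _ _ I P s' ->
           @feasD _ _ _ I (psi s') /\ phi (psi s') = s')].
Proof. by move=> vP; exact: main. Qed.
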